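(* For every $x\in\Delta\setminus\partial\Delta$, $\nabla H\cdot F(x)=p(x)\ge0$, where $p(x)=\sum_{i,j,k\in\mathbb{V}:\,x_{ij},x_{ik}>0}\frac{x_{ij}x_{ik}}{x_i}(y_{ij}-y_{ik})^2$. In particular $H$ is a Lyapunov function on $\Delta\setminus\partial\Delta$ for the ODE $\dot x=F(x)$.
   Context: Let $G=(\mathbb{V},E)$ be a finite graph with adjacency $\sim$. Let $a_{ij}=a_{ji}\ge0$ ($>0$ only if $i\sim j$) and $p_{ij}=p_{ji}\in[0,1]$ ($=0$ if $i\not\sim j$), with some $a_{ij}p_{ij}>0$. Fix $h_1\in(0,1]$; $\Delta$ is the set of arrays $x=(x_{ij})_{i,j\in\mathbb{V}}$ with $x_{ij}=x_{ji}\ge0$, $x_{ij}=0$ if $i\not\sim j$, $\sum_{i,j}x_{ij}=1$, $\sum_{(i,j):a_{ij}p_{ij}>0}x_{ij}\ge h_1$; $x_i=\sum_jx_{ij}$. $\partial\Delta$: the $x\in\Delta$ such that some vertex $i$ having a neighbour $j$ with $a_{ij}p_{ij}>0$ has $\sum_{j:a_{ij}p_{ij}>0}x_{ij}=0$. $H(x)=\sum_{(i,j):x_{ij}>0}a_{ij}p_{ij}x_{ij}^2/(x_ix_j)$; $y_{ij}=a_{ij}p_{ij}x_{ij}/(x_ix_j)$ (weighted efficiency; $0$ if $a_{ij}p_{ij}=0$); $F(x)_{ij}=x_{ij}(y_{ij}-H(x))$ ($0$ if $x_{ij}=0$). Here $\nabla H=(\partial H/\partial x_{ij})_{i,j}$,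 where $H$ is regarded as a function of the variables $x_{ij}$ indexed by ordered pairs, $x_{ij}$ and $x_{ji}$ being treated as independent variables, with $x_i=\sum_jx_{ij}$; $\nabla H\cdot F=\sum_{i,j}\frac{\partial H}{\partial x_{ij}}F_{ij}$. *)

(* Defs.v *)
From HB Require Import structures.
From mathcomp Require Import all_boot all_order all_algebra.
From mathcomp Require Import all_classical all_reals all_analysis.
Set Implicit Arguments. Unset Strict Implicit. Unset Printing Implicit Defensive.
Import Order.TTheory GRing.Theory Num.Theory.
Local Open Scope ring_scope.

Section Defs.
Variables (R : realType) (V : finType).
Implicit Types (x a p : V -> V -> R) (adj : rel V).

Definition wgt a p i j : R := a i j * p i j.

Definition xv x i : R := \sum_(j : V) x i j.

Definition inDelta adj a p (h1 : R) x : Prop :=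
  [/\ (forall i j, x i j = x j i),
      (forall i j, 0 <= x i j),
      (forall i j, ~~ adj i j -> x i j = 0),
      \sum_(i : V) \sum_(j : V) x i j = 1
    & h1 <= \sum_(i : V) \sum_(j : V | 0 < wgt a p i j) x i j].

Definition inBoundary a p x : Prop :=
  exists i, (exists j, 0 < wgt a p i j) /\
            \sum_(j : V | 0 < wgt a p i j) x i j = 0.

Definition Hfun a p x : R :=
  \sum_(i : V) \sum_(j : V | 0 < x i j)
     wgt a p i j * x i j ^+ 2 / (xv x i * xv x j).

Definition yfun a p x i j : R :=
  if 0 < wgt a p i j then wgt a p i j * x i j / (xv x i * xv x j) else 0.

Definition Ffun a p x i j : R :=
  if x i j == 0 then 0 else x i j * (yfun a p x i j - Hfun a p x).

(* x with the single (ordered) coordinate (i,j) replaced by t;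
   x_ij and x_ji are independent variables *)
Definition upd x i j (t : R) : V -> V -> R :=
  fun k l => if (k == i) && (l == j) then t else x k l.

Definition dHdx a p x i j : R :=
  derive1 (fun t : R => Hfun a p (upd x i j t)) (x i j).

Definition gradH_dot_F a p x : R :=
  \sum_(i : V) \sum_(j : V) dHdx a p x i j * Ffun a p x i j.

Definition pfun a p x : R :=
  \sum_(i : V) \sum_(j : V) \sum_(k : V | (0 < x i j) && (0 < x i k))
     x i j * x i k / xv x i * (yfun a p x i j - yfun a p x i k) ^+ 2.

End Defs.

(* Main.v *)
Require Import Defs.
From HB Require Import structures.
From mathcomp Require Import all_boot all_order all_algebra.
From mathcomp Require Import all_classical all_reals all_analysis.
From mathcomp Require Import ring lra.
Import Order.TTheory GRing.Theory Num.Theory.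
Set Implicit Arguments. Unset Strict Implicit. Unset Printing Implicit Defensive.
Local Open Scope ring_scope.

Section A.
Variable R : realType.

Lemma is_derive_bsum (I : finType) (P : pred I) (h : I -> R -> R) (t0 : R)
  (dh : I -> R) : (forall i, P i -> is_derive t0 (1:R) (h i) (dh i)) ->
  is_derive t0 (1:R) (fun t => \sum_(i | P i) h i t) (\sum_(i | P i) dh i).
Proof.
move=> H; rewrite -fct_sumE.
elim/big_rec2: _ => [|i f d Pi IH]; first exact: is_derive_cst.
exact: is_deriveD (H i Pi) IH.
Qed.

Lemma is_deriveV' (f : R -> R) t0 df : f t0 != 0 -> is_derive t0 (1:R) f df ->
  is_derive t0 (1:R) (fun t => (f t)^-1) (- (f t0) ^- 2 * df).
Proof.
move=> f0 [fd <-]; apply: DeriveDef; first exact: derivableV.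
by rewrite deriveV.
Qed.

Lemma is_derive_frac (u A B : R -> R) t0 du dA dB c :
  is_derive t0 (1:R) u du -> is_derive t0 (1:R) A dA -> is_derive t0 (1:R) B dB ->
  A t0 != 0 -> B t0 != 0 ->
  is_derive t0 (1:R) (fun t => c * u t ^+ 2 / (A t * B t))
   (c * (2 * u t0 * du / (A t0 * B t0)
     - u t0 ^+ 2 * (dA * B t0 + A t0 * dB) / (A t0 * B t0) ^+ 2)).
Proof.
move=> hu hA hB A0 B0.
have hAB := is_deriveM hA hB.
have AB0 : (A * B) t0 != 0 by rewrite /= mulf_neq0.
have hV := is_deriveV' AB0 hAB.
have hu2 := is_deriveX 2 hu.
have hcu := is_deriveZ c hu2.
have hall := is_deriveM hcu hV.
have -> : (fun t => c * u t ^+ 2 / (A t * B t)) = ((c *: u ^+ 2) * (fun t => ((A * B) t)^-1)).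
  by apply/funext => t /=; rewrite /GRing.scale /=.
apply: is_derive_eq hall _.
have e1 : (A * B) t0 = A t0 * B t0 by [].
have e2 : (u ^+ 2) t0 = u t0 ^+ 2 by rewrite exprfctE.
rewrite e1 /GRing.scale /=. rewrite ?fctE ?exprfctE /= /GRing.scale /=. field. by rewrite A0 B0.
Qed.

Section B.
Variables (V : finType).
Implicit Types (x a p : V -> V -> R).

Definition yy a p x k l : R := wgt a p k l * x k l / (xv x k * xv x l).

Definition dT a p x (i j k l : V) : R :=
  (if (k == i) && (l == j) then 2 * yy a p x k l else 0)
  - (if k == i then x k l * yy a p x k l / xv x k else 0)
  - (if l == i then x k l * yy a p x k l / xv x l else 0).

Lemma upd_id x i j : upd x i j (x i j) = x.
Proof.
apply/funext => k; apply/funext => l; rewrite /upd.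
by case: ifP => // /andP[/eqP -> /eqP ->].
Qed.

Lemma sum_if1 (I : finType) (i : I) (F : I -> R) :
  \sum_(k : I) (if k == i then F k else 0) = F i.
Proof. by rewrite -big_mkcond big_pred1_eq. Qed.

Lemma deriv_upd x i j k l (t0 : R) :
  is_derive t0 (1:R) (fun t => upd x i j t k l)
    (if (k == i) && (l == j) then 1 else 0).
Proof.
rewrite /upd; case: ifP => _; [exact: is_derive_id | exact: is_derive_cst].
Qed.

Lemma deriv_xv x i j k (t0 : R) :
  is_derive t0 (1:R) (fun t => xv (upd x i j t) k) (if k == i then 1 else 0).
Proof.
rewrite /xv.
suff -> : (if k == i then 1 else 0) = \sum_(m : V) (if (k == i) && (m == j) then (1:R) else 0).
  by apply: is_derive_bsum => m _; exact: deriv_upd.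
case: (k == i) => /=; first by rewrite sum_if1.
by rewrite big1.
Qed.

Lemma xv_ge x k l : (forall k l, 0 <= x k l) -> x k l <= xv x k.
Proof.
move=> xnn; rewrite /xv (bigD1 l) //= lerDl.
by apply: sumr_ge0 => m _.
Qed.

Lemma xv_pos x k l : (forall k l, 0 <= x k l) -> 0 < x k l -> 0 < xv x k.
Proof. move=> xnn h; apply: (lt_le_trans h). exact: xv_ge. Qed.

Lemma dHdx_eq a p x i j :
  (forall k l, 0 <= x k l) -> (forall k l, x k l = x l k) ->
  0 < x i j ->
  dHdx a p x i j = \sum_(k : V) \sum_(l : V | 0 < x k l) dT a p x i j k l.
Proof.
move=> xnn xsym xij.
pose G := fun t : R => \sum_(k : V) \sum_(l : V | 0 < x k l)
   wgt a p k l * upd x i j t k l ^+ 2 / (xv (upd x i j t) k * xv (upd x i j t) l).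
rewrite /dHdx derive1E.
rewrite (@near_eq_derive _ _ _ _ G); last first.
  near=> t.
  have tpos : 0 < t by near: t; exact: lt_nbhsr.
  rewrite /Hfun /G; apply: eq_bigr => k _; apply: eq_bigl => l.
  rewrite /upd; case: ifP => // /andP[/eqP -> /eqP ->].
  by rewrite tpos xij.
apply: derive_val.
apply: is_derive_bsum => k _; apply: is_derive_bsum => l xkl.
have Xk : xv x k != 0 by rewrite gt_eqF // (xv_pos xnn xkl).
have Xl : xv x l != 0.
  by rewrite gt_eqF // (@xv_pos x l k xnn) // -xsym.
have := is_derive_frac (wgt a p k l) (deriv_upd x i j k l (x i j))
   (deriv_xv x i j k (x i j)) (deriv_xv x i j l (x i j)).
rewrite !upd_id => /(_ Xk Xl).
move=> h; apply: (is_derive_eq h).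
rewrite /dT /yy.
case: (k == i); case: (l == j); case: (l == i) => /=; field; by rewrite Xk Xl.
Unshelve. all: by end_near.
Qed.


Lemma wgt_ge0 a p k l : (forall i j, 0 <= a i j) -> (forall i j, 0 <= p i j <= 1) ->
  0 <= wgt a p k l.
Proof. move=> an pn; rewrite /wgt mulr_ge0 //; by case/andP: (pn k l). Qed.

Lemma yfun_eq a p x k l : (forall i j, 0 <= a i j) -> (forall i j, 0 <= p i j <= 1) ->
  yfun a p x k l = yy a p x k l.
Proof.
move=> an pn; rewrite /yfun /yy; case: ifP => // /negbT.
rewrite -leNgt => w0.
have -> : wgt a p k l = 0 by apply/eqP; rewrite eq_le w0 wgt_ge0.
by rewrite !mul0r.
Qed.

Lemma yy_sym a p x k l : (forall i j, a i j = a j i) -> (forall i j, p i j = p j i) ->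
  (forall i j, x i j = x j i) -> yy a p x k l = yy a p x l k.
Proof.
move=> asym psym xsym; rewrite /yy /wgt asym psym xsym; congr (_ / _); exact: mulrC.
Qed.

Lemma D_eq a p x i j :
  (forall i j, a i j = a j i) -> (forall i j, p i j = p j i) ->
  (forall k l, 0 <= x k l) -> (forall k l, x k l = x l k) ->
  \sum_(k : V) \sum_(l : V | 0 < x k l) dT a p x i j k l =
  2 * yy a p x i j - 2 * (\sum_(l : V) x i l * yy a p x i l) / xv x i.
Proof.
move=> asym psym xnn xsym.
have -> : \sum_(k : V) \sum_(l : V | 0 < x k l) dT a p x i j k l =
          \sum_(k : V) \sum_(l : V) dT a p x i j k l.
  apply: eq_bigr => k _; rewrite big_mkcond; apply: eq_bigr => l _.
  case: ifP => // /negbT; rewrite lt0r xnn andbT negbK => /eqP xkl0.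
  by rewrite /dT /yy xkl0 !(mulr0, mul0r) !if_same !subr0.
rewrite /dT.
under eq_bigr => k _ do rewrite !sumrB.
rewrite !sumrB.
have T1 : \sum_(k : V) \sum_(l : V) (if (k == i) && (l == j) then 2 * yy a p x k l else 0)
   = 2 * yy a p x i j.
  rewrite -(sum_if1 i (fun k => 2 * yy a p x k j)); apply: eq_bigr => k _.
  case: (k == i) => /=; first by rewrite (sum_if1 j (fun l => 2 * yy a p x k l)).
  by rewrite big1.
have T2 : \sum_(k : V) \sum_(l : V) (if k == i then x k l * yy a p x k l / xv x k else 0)
   = \sum_(l : V) x i l * yy a p x i l / xv x i.
  rewrite -(sum_if1 i (fun k => \sum_(l : V) x k l * yy a p x k l / xv x k)).
  apply: eq_bigr => k _; case: (k == i) => //; by rewrite big1.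
have T3 : \sum_(k : V) \sum_(l : V) (if l == i then x k l * yy a p x k l / xv x l else 0)
   = \sum_(l : V) x i l * yy a p x i l / xv x i.
  apply: eq_bigr => k _; rewrite (sum_if1 i (fun l => x k l * yy a p x k l / xv x l)).
  by rewrite xsym yy_sym.
rewrite T1 T2 T3 -mulr_suml; ring.
Qed.

Lemma row_id (I : finType) (xr yr : I -> R) (H : R) : (forall j, 0 <= xr j) ->
  \sum_j xr j * (yr j - H) * (2 * yr j - 2 * (\sum_l xr l * yr l) / (\sum_l xr l))
  = \sum_j \sum_k xr j * xr k / (\sum_l xr l) * (yr j - yr k) ^+ 2.
Proof.
move=> xnn.
have [X0|Xn0] := eqVneq (\sum_l xr l) 0.
  have z := psumr_eq0P (fun j _ => xnn j) X0.
  rewrite [LHS]big1; last by move=> j _; rewrite z // !mul0r.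
  by rewrite big1 // => j _; rewrite big1 // => k _; rewrite z // !mul0r.
set X := \sum_l xr l.
set S := \sum_l xr l * yr l.
have E1 : forall j, xr j * (yr j - H) * (2 * yr j - 2 * S / X) =
  2 * (xr j * yr j ^+ 2) + (- (2 * S / X) - 2 * H) * (xr j * yr j) + (2 * H * S / X) * xr j.
  by move=> j; ring.
rewrite (eq_bigr _ (fun j _ => E1 j)) !big_split /= -!mulr_sumr.
have E2 : forall j k, xr j * xr k / X * (yr j - yr k) ^+ 2 =
  (X^-1 * (xr j * yr j ^+ 2)) * xr k + (-2 * X^-1 * (xr j * yr j)) * (xr k * yr k)
  + (X^-1 * xr j) * (xr k * yr k ^+ 2).
  by move=> j k; ring.
under eq_bigr => j _ do rewrite (eq_bigr _ (fun k _ => E2 j k)) !big_split /= -!mulr_sumr.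
rewrite !big_split /= -!mulr_suml -/X -/S.
rewrite -!mulr_sumr -/S -/X.
field.
exact: Xn0.
Qed.

End B.
End A.

Theorem proposition2 (R : realType) (V : finType) (adj : rel V)
    (a p : V -> V -> R) (h1 : R) :
  symmetric adj ->
  (forall i j, a i j = a j i) ->
  (forall i j, 0 <= a i j) ->
  (forall i j, 0 < a i j -> adj i j) ->
  (forall i j, p i j = p j i) ->
  (forall i j, 0 <= p i j <= 1) ->
  (forall i j, ~~ adj i j -> p i j = 0) ->
  (exists i j, 0 < wgt a p i j) ->
  0 < h1 <= 1 ->
  forall x : V -> V -> R,
    inDelta adj a p h1 x -> ~ inBoundary a p x ->
    gradH_dot_F a p x = pfun a p x /\ 0 <= pfun a p x.
Proof.
move=> _ asym ann _ psym pnn _ _ _ x [xsym xnn _ _ _] _.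
have P : pfun a p x = \sum_(i : V) \sum_(j : V) \sum_(k : V)
    x i j * x i k / xv x i * (yy a p x i j - yy a p x i k) ^+ 2.
  rewrite /pfun; apply: eq_bigr => i _; apply: eq_bigr => j _.
  rewrite big_mkcond; apply: eq_bigr => k _.
  rewrite !yfun_eq //; case: ifP => // /negbT.
  rewrite negb_and !lt0r !xnn !andbT !negbK => /orP[] /eqP ->;
    by rewrite ?mul0r ?mulr0 ?mul0r.
split; last first.
  rewrite /pfun; apply: sumr_ge0 => i _; apply: sumr_ge0 => j _; apply: sumr_ge0 => k _.
  apply: mulr_ge0; last exact: sqr_ge0.
  apply: divr_ge0; first exact: mulr_ge0.
  by apply: sumr_ge0.
rewrite P /gradH_dot_F.
transitivity (\sum_(i : V) \sum_(j : V) x i j * (yy a p x i j - Hfun a p x) *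
   (2 * yy a p x i j - 2 * (\sum_(l : V) x i l * yy a p x i l) / (\sum_(l : V) x i l))).
  apply: eq_bigr => i _; apply: eq_bigr => j _.
  rewrite /Ffun; case: eqP => [->|/eqP nz]; first by rewrite mulr0 !mul0r.
  have xij : 0 < x i j by rewrite lt0r nz xnn.
  rewrite dHdx_eq // D_eq // yfun_eq // /xv; ring.
apply: eq_bigr => i _.
exact: row_id.
Qed.
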